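(* Let $\gamma:I\to\mathbb{R}^2$ be a smooth curve, star-shaped with respect to the origin and parametrized so that $[\gamma(t),\gamma'(t)]=1$, and let $p$ be its centroaffine curvature, defined by $\gamma''=-p\gamma$. Assume $p(t)\neq0$ and $p'(t)\neq 0$ for all $t\in I$. Then for any $t_0\neq t_1$ in $I$, the osculating central conics of $\gamma$ at $\gamma(t_0)$ and $\gamma(t_1)$ are disjoint and nested.
   Context: $[u,v]$ denotes the determinant of the $2\times2$ matrix with columns $u,v$; a curve is star-shaped with respect to the origin if $[\gamma,\gamma']\neq0$. A central conic is a curve $Q(X,Y):=aX^2+2bXY+cY^2=1$; it is an ellipse if $ac-b^2>0$ and a hyperbola if $ac-b^2<0$. The osculating central conic of $\gamma$ at $\gamma(t)$ is the central conic tangent to $\gamma$ at $\gamma(t)$ whose determinant $ac-b^2$ equals $p(t)$; explicitly, writing $\gamma=(x,y)$, its coefficients are $a=py^2+(y')^2$, $b=-(pxy+x'y')$, $c=px^2+(x')^2$. Two central conics $Q_1=1$, $Q_2=1$ are called nested if one of the sets $\{Q_1\ge 1\}$, $\{Q_2\ge1\}$ contains the other (for ellipses this is equivalent to one of the closed regions they bound containing the other). *)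

(* Defs.v *)
From Stdlib Require Import Reals.
From Coquelicot Require Import Coquelicot.
Open Scope R_scope.

Definition in_interval (a b : Rbar) (t : R) : Prop :=
  Rbar_lt a (Finite t) /\ Rbar_lt (Finite t) b.

Definition smooth_on (a b : Rbar) (f : R -> R) : Prop :=
  forall (n : nat) (t : R), in_interval a b t -> ex_derive (Derive_n f n) t.

Record central_conic := mk_conic { cc_a : R; cc_b : R; cc_c : R }.

Definition conicQ (C : central_conic) (X Y : R) : R :=
  cc_a C * X ^ 2 + 2 * cc_b C * X * Y + cc_c C * Y ^ 2.

Definition osc_conic (x y p : R -> R) (t : R) : central_conic :=
  mk_conic (p t * (y t) ^ 2 + (Derive y t) ^ 2)
           (- (p t * x t * y t + Derive x t * Derive y t))
           (p t * (x t) ^ 2 + (Derive x t) ^ 2).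

Definition conics_disjoint (C1 C2 : central_conic) : Prop :=
  ~ (exists X Y : R, conicQ C1 X Y = 1 /\ conicQ C2 X Y = 1).

Definition conics_nested (C1 C2 : central_conic) : Prop :=
  (forall X Y : R, conicQ C1 X Y >= 1 -> conicQ C2 X Y >= 1) \/
  (forall X Y : R, conicQ C2 X Y >= 1 -> conicQ C1 X Y >= 1).

(* Main.v *)
Require Import Defs.
From Stdlib Require Import Reals Lra.
From Coquelicot Require Import Coquelicot.
Open Scope R_scope.

Lemma locI (a b : Rbar) t : in_interval a b t -> locally t (in_interval a b).
Proof.
  intros H. apply (locally_open (fun u : R => Rbar_lt a u /\ Rbar_lt u b)); auto.
  apply open_and; [apply open_Rbar_gt | apply open_Rbar_lt].
Qed.

Lemma convI (a b : Rbar) u w s : in_interval a b u -> in_interval a b w ->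
  u <= s <= w -> in_interval a b s.
Proof.
  unfold in_interval; destruct a, b; simpl; intros; lra.
Qed.

Lemma loc_open_int u w s : u < s < w -> locally s (fun r => u < r < w).
Proof.
  intros H. apply (locally_open (fun r : R => u < r /\ r < w)); auto.
  apply open_and; [apply open_gt | apply open_lt].
Qed.

Lemma cont_of_derive f s l : is_derive f s l -> continuity_pt f s.
Proof.
  intros H. apply continuity_pt_filterlim.
  apply (ex_derive_continuous f s). exists l; exact H.
Qed.

Lemma ex_cont f s : ex_derive f s -> continuity_pt f s.
Proof.
  intros H. apply continuity_pt_filterlim. apply (ex_derive_continuous f s). exact H.
Qed.

Lemma sign_const (f : R -> R) (a b : Rbar) :
  (forall t, in_interval a b t -> continuity_pt f t) ->
  (forall t, in_interval a b t -> f t <> 0) ->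
  forall u w, in_interval a b u -> in_interval a b w -> u < w ->
  (0 < f u -> 0 < f w) /\ (f u < 0 -> f w < 0).
Proof.
  intros Hc Hn u w Hu Hw Huw. split; intros Hfu.
  - destruct (Rlt_or_le 0 (f w)) as [?|Hle]; auto. exfalso.
    assert (Hfw : f w < 0) by (generalize (Hn w Hw); lra).
    destruct (IVT_Rbar_decr f u w (f u) (f w) 0) as [c [H1 [H2 H3]]].
    + apply is_lim_continuity; auto.
    + apply is_lim_continuity; auto.
    + intros c H1 H2; apply Hc; apply (convI a b u w); auto; simpl in *; lra.
    + simpl; auto.
    + simpl; split; lra.
    + simpl in *; apply (Hn c); auto. apply (convI a b u w); auto; lra.
  - destruct (Rlt_or_le (f w) 0) as [?|Hle]; auto. exfalso.
    assert (Hfw : 0 < f w) by (generalize (Hn w Hw); lra).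
    destruct (IVT_Rbar_incr f u w (f u) (f w) 0) as [c [H1 [H2 H3]]].
    + apply is_lim_continuity; auto.
    + apply is_lim_continuity; auto.
    + intros c H1 H2; apply Hc; apply (convI a b u w); auto; simpl in *; lra.
    + simpl; auto.
    + simpl; split; lra.
    + simpl in *; apply (Hn c); auto. apply (convI a b u w); auto; lra.
Qed.

Lemma mono (F dF : R -> R) u w :
  (forall s, u <= s <= w -> is_derive F s (dF s)) ->
  (forall s, u <= s <= w -> 0 <= dF s) ->
  forall s s', u <= s -> s <= s' -> s' <= w -> F s <= F s'.
Proof.
  intros HD Hpos s s' H1 H2 H3.
  destruct (MVT_gen F s s' dF) as [c [Hc Heq]].
  - intros z Hz. rewrite Rmin_left in Hz by lra. rewrite Rmax_right in Hz by lra.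
    apply HD; lra.
  - intros z Hz. rewrite Rmin_left in Hz by lra. rewrite Rmax_right in Hz by lra.
    apply (cont_of_derive F z (dF z)). apply HD; lra.
  - rewrite Rmin_left in Hc by lra. rewrite Rmax_right in Hc by lra.
    assert (0 <= dF c) by (apply Hpos; lra).
    assert (0 <= dF c * (s' - s)) by (apply Rmult_le_pos; lra).
    lra.
Qed.

Lemma strict (F dF g h : R -> R) u w : u < w ->
  (forall s, u <= s <= w -> is_derive F s (dF s)) ->
  (forall s, u <= s <= w -> 0 <= dF s) ->
  (forall s, u < s < w -> dF s = 0 -> g s = 0) ->
  (forall s, u < s < w -> is_derive g s (h s)) ->
  (forall s, u < s < w -> g s = 0 -> h s = 0 -> False) -> F u < F w.
Proof.
  intros Huw HD Hpos Hg Hgd Hgh.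
  destruct (Rlt_or_le (F u) (F w)) as [?|Hle]; auto. exfalso.
  assert (Hc : forall s, u <= s <= w -> F s = F u).
  { intros s Hs. pose proof (mono F dF u w HD Hpos u s) as A.
    pose proof (mono F dF u w HD Hpos s w) as B. 
    assert (F u <= F s) by (apply A; lra). assert (F s <= F w) by (apply B; lra). lra. }
  assert (Hg0 : forall s, u < s < w -> g s = 0).
  { intros s Hs. apply Hg; auto.
    assert (E : is_derive F s 0).
    { apply (is_derive_ext_loc (fun _ => F u)).
      - apply (filter_imp (fun r => u < r < w)); [|apply loc_open_int; auto].
        intros r Hr. symmetry; apply Hc; lra.
      - apply (is_derive_const (F u) s). }
    apply is_derive_unique in E. rewrite <- E. symmetry. apply is_derive_unique.
    apply HD; lra. }
  set (m := (u + w) / 2).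
  assert (Hm : u < m < w) by (unfold m; lra).
  apply (Hgh m Hm (Hg0 m Hm)).
  assert (E : is_derive g m 0).
  { apply (is_derive_ext_loc (fun _ => 0)).
    - apply (filter_imp (fun r => u < r < w)); [|apply loc_open_int; auto].
      intros r Hr. symmetry; apply Hg0; lra.
    - apply (is_derive_const 0 m). }
  apply is_derive_unique in E. rewrite <- E. symmetry. apply is_derive_unique.
  apply Hgd; auto.
Qed.

Theorem theorem2 (a b : Rbar) (x y p : R -> R)
  (Hsx : smooth_on a b x) (Hsy : smooth_on a b y)
  (Hdet : forall t, in_interval a b t -> x t * Derive y t - y t * Derive x t = 1)
  (Hpx : forall t, in_interval a b t -> Derive_n x 2 t = - p t * x t)
  (Hpy : forall t, in_interval a b t -> Derive_n y 2 t = - p t * y t)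
  (Hp0 : forall t, in_interval a b t -> p t <> 0)
  (Hp1 : forall t, in_interval a b t -> Derive p t <> 0) :
  forall t0 t1, in_interval a b t0 -> in_interval a b t1 -> t0 <> t1 ->
    conics_disjoint (osc_conic x y p t0) (osc_conic x y p t1) /\
    conics_nested (osc_conic x y p t0) (osc_conic x y p t1).
Proof.
  set (I := in_interval a b).
  assert (Ex0 : forall t, I t -> ex_derive x t) by (intros t Ht; exact (Hsx 0%nat t Ht)).
  assert (Ex1 : forall t, I t -> ex_derive (Derive x) t) by (intros t Ht; exact (Hsx 1%nat t Ht)).
  assert (Ex2 : forall t, I t -> ex_derive (Derive (Derive x)) t) by (intros t Ht; exact (Hsx 2%nat t Ht)).
  assert (Ex3 : forall t, I t -> ex_derive (Derive (Derive (Derive x))) t) by (intros t Ht; exact (Hsx 3%nat t Ht)).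
  assert (Ey0 : forall t, I t -> ex_derive y t) by (intros t Ht; exact (Hsy 0%nat t Ht)).
  assert (Ey1 : forall t, I t -> ex_derive (Derive y) t) by (intros t Ht; exact (Hsy 1%nat t Ht)).
  assert (Ey2 : forall t, I t -> ex_derive (Derive (Derive y)) t) by (intros t Ht; exact (Hsy 2%nat t Ht)).
  assert (Ey3 : forall t, I t -> ex_derive (Derive (Derive (Derive y))) t) by (intros t Ht; exact (Hsy 3%nat t Ht)).
  assert (Hx2 : forall t, I t -> Derive (Derive x) t = - p t * x t) by (intros t Ht; exact (Hpx t Ht)).
  assert (Hy2 : forall t, I t -> Derive (Derive y) t = - p t * y t) by (intros t Ht; exact (Hpy t Ht)).
  set (dp := fun s => Derive x s * Derive (Derive (Derive y)) s - Derive y s * Derive (Derive (Derive x)) s).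
  assert (Hpeq : forall s, I s -> Derive x s * Derive (Derive y) s - Derive y s * Derive (Derive x) s = p s).
  { intros s Hs. rewrite Hx2, Hy2 by auto.
    replace (Derive x s * (- p s * y s) - Derive y s * (- p s * x s))
      with (p s * (x s * Derive y s - y s * Derive x s)) by ring.
    rewrite Hdet by auto. ring. }
  assert (Hdp : forall s, I s -> is_derive p s (dp s)).
  { intros s Hs.
    apply (is_derive_ext_loc (fun s => Derive x s * Derive (Derive y) s - Derive y s * Derive (Derive x) s)).
    - apply (filter_imp I); [|apply locI; auto]. intros r Hr; apply Hpeq; auto.
    - auto_derive.
      + repeat split; auto.
      + unfold dp. change (fun x0 => Derive x x0) with (Derive x).
        change (fun x0 => Derive y x0) with (Derive y).
        change (fun x0 => Derive (Derive x) x0) with (Derive (Derive x)).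
        change (fun x0 => Derive (Derive y) x0) with (Derive (Derive y)).
        ring. }
  assert (Hdpc : forall s, I s -> continuity_pt dp s).
  { intros s Hs. unfold dp.
    change (continuity_pt ((Derive x * Derive (Derive (Derive y))) - (Derive y * Derive (Derive (Derive x))))%F s).
    apply continuity_pt_minus; apply continuity_pt_mult; apply ex_cont; auto. }
  assert (Hdpn : forall s, I s -> dp s <> 0).
  { intros s Hs. rewrite <- (is_derive_unique p s (dp s)) by auto. auto. }
  pose proof (sign_const dp a b Hdpc Hdpn) as Hsign.
  assert (Hnz : forall X Y s, ~ (X = 0 /\ Y = 0) \/ conicQ (osc_conic x y p s) X Y = 0).
  { intros X Y s. destruct (Req_dec X 0) as [->|HX]; [destruct (Req_dec Y 0) as [->|HY]|].
    - right. unfold conicQ; simpl; ring.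
    - left; intros [_ C]; auto.
    - left; intros [C _]; auto. }
  assert (Key : forall u w, I u -> I w -> u < w -> forall X Y, ~ (X = 0 /\ Y = 0) ->
     (0 < dp u -> conicQ (osc_conic x y p u) X Y < conicQ (osc_conic x y p w) X Y) /\
     (dp u < 0 -> conicQ (osc_conic x y p w) X Y < conicQ (osc_conic x y p u) X Y)).
  { intros u w Hu Hw Huw X Y HXY.
    set (g := fun s => x s * Y - y s * X).
    set (h := fun s => Derive x s * Y - Derive y s * X).
    set (F := fun s => conicQ (osc_conic x y p s) X Y).
    assert (HI : forall s, u <= s <= w -> I s) by (intros s Hs; apply (convI a b u w); auto).
    assert (HD : forall s, I s -> is_derive F s (dp s * g s ^ 2)).
    { intros s Hs.
      apply (is_derive_ext (fun s => p s * (x s * Y - y s * X) ^ 2 + (Derive x s * Y - Derive y s * X) ^ 2)).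
      { intros r. unfold F, conicQ; simpl. ring. }
      auto_derive.
      - repeat split; auto. exists (dp s); auto.
      - change (fun x0 => p x0) with p. change (fun x0 => x x0) with x.
        change (fun x0 => y x0) with y.
        rewrite (is_derive_unique p s (dp s)) by auto.
        change (fun x0 => Derive x x0) with (Derive x).
        change (fun x0 => Derive y x0) with (Derive y).
        rewrite Hx2, Hy2 by auto. unfold g. ring. }
    assert (Hgd : forall s, I s -> is_derive g s (h s)).
    { intros s Hs. unfold g, h. auto_derive.
      - repeat split; auto.
      - change (fun x0 => x x0) with x. change (fun x0 => y x0) with y. cbv beta. ring. }
    assert (Hgh : forall s, u < s < w -> g s = 0 -> h s = 0 -> False).
    { intros s Hs Hg Hh. assert (Is : I s) by (apply HI; lra).
      assert (EX : Derive x s * g s - x s * h s = X * (x s * Derive y s - y s * Derive x s)) by (unfold g, h; ring).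
      assert (EY : Derive y s * g s - y s * h s = Y * (x s * Derive y s - y s * Derive x s)) by (unfold g, h; ring).
      rewrite Hdet in EX, EY by auto. rewrite Hg, Hh in EX, EY.
      apply HXY; split; lra. }
    assert (Hg0 : forall s, u < s < w -> dp s <> 0 -> dp s * g s ^ 2 = 0 -> g s = 0).
    { intros s Hs Hd E. apply Rmult_integral in E. destruct E as [E|E]; [contradiction|].
      nra. }
    assert (Hdps : forall s, u <= s <= w -> (0 < dp u -> 0 < dp s) /\ (dp u < 0 -> dp s < 0)).
    { intros s Hs. destruct (Req_dec s u) as [->|Hsu]; [split; auto|].
      apply Hsign; [exact Hu | apply HI; auto | lra]. }
    split; intros Hsg.
    - apply (strict F (fun s => dp s * g s ^ 2) g h u w Huw).
      + intros s Hs; apply HD; auto.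
      + intros s Hs. apply Rmult_le_pos; [|apply pow2_ge_0].
        left; apply (proj1 (Hdps s Hs)); auto.
      + intros s Hs. apply Hg0; auto. apply Hdpn; apply HI; lra.
      + intros s Hs. apply Hgd; apply HI; lra.
      + auto.
    - cut (- F u < - F w); [unfold F; lra|].
      apply (strict (fun s => - F s) (fun s => - (dp s * g s ^ 2)) g h u w Huw).
      + intros s Hs; apply (is_derive_opp F); apply HD; auto.
      + intros s Hs. assert (dp s < 0) by (apply (proj2 (Hdps s Hs)); auto).
        assert (0 <= g s ^ 2) by apply pow2_ge_0. nra.
      + intros s Hs E. apply Hg0; auto. apply Hdpn; apply HI; lra. lra.
      + intros s Hs. apply Hgd; apply HI; lra.
      + auto. }
  assert (Main : forall u w, I u -> I w -> u < w ->
     conics_disjoint (osc_conic x y p u) (osc_conic x y p w) /\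
     conics_nested (osc_conic x y p u) (osc_conic x y p w)).
  { intros u w Hu Hw Huw. split.
    - intros [X [Y [E0 E1]]].
      destruct (Hnz X Y u) as [HXY|Z]; [|lra].
      destruct (Key u w Hu Hw Huw X Y HXY) as [K1 K2].
      destruct (Rlt_or_le 0 (dp u)) as [Hd|Hd]; [specialize (K1 Hd); lra|].
      assert (dp u < 0) by (generalize (Hdpn u Hu); lra). specialize (K2 H); lra.
    - destruct (Rlt_or_le 0 (dp u)) as [Hd|Hd].
      + left. intros X Y HQ. destruct (Hnz X Y u) as [HXY|Z]; [|lra].
        destruct (Key u w Hu Hw Huw X Y HXY) as [K1 K2]. specialize (K1 Hd); lra.
      + assert (Hd' : dp u < 0) by (generalize (Hdpn u Hu); lra).
        right. intros X Y HQ. destruct (Hnz X Y w) as [HXY|Z]; [|lra].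
        destruct (Key u w Hu Hw Huw X Y HXY) as [K1 K2]. specialize (K2 Hd'); lra. }
  intros t0 t1 H0 H1 Hne.
  destruct (Rlt_or_le t0 t1) as [Hl|Hl].
  - apply Main; auto.
  - assert (Hl' : t1 < t0) by lra.
    destruct (Main t1 t0 H1 H0 Hl') as [D N]. split.
    + intros [X [Y [E0 E1]]]. apply D. exists X, Y; auto.
    + destruct N; [right|left]; auto.
Qed.
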